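(* Let $A \in \{-1,0,1\}^{m\times n}$ have pairwise distinct columns $A_1,\dots,A_n$, and let $t \in [0,1)^m$ be such that $\Delta_k(t+A) \le 1$ for $k \in \{1,2\}$. Then every set $E \in \mathcal{E}_A$ is the support of at most two columns of $A$.
   Context: For a real matrix $M$ and $k\ge 1$, $\Delta_k(M)$ denotes the maximum of $|\det(B)|$ over all $k\times k$ submatrices $B$ of $M$. For $t\in\mathbb{R}^m$, $t+A$ is the matrix with columns $t+A_1,\dots,t+A_n$. The support of $y \in \mathbb{R}^m$ is $\mathrm{supp}(y)=\{j\in[m]: y_j\neq 0\}$, and $\mathcal{E}_A = \{\mathrm{supp}(A_i) : i \in [n]\}\subseteq 2^{[m]}$. *)

(* Defs.v *)
From mathcomp Require Import all_boot all_order all_algebra.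
From mathcomp Require Import reals.
Set Implicit Arguments. Unset Strict Implicit. Unset Printing Implicit Defensive.
Import Order.TTheory GRing.Theory Num.Theory.
Local Open Scope ring_scope.

(* A k x k submatrix is given by k distinct rows (injective f) and
   k distinct columns (injective g); reordering rows/columns does not
   change |det|, so ranging over injective maps is the same maximum. *)
Definition Delta (R : realFieldType) (m n k : nat) (M : 'M[R]_(m, n)) : R :=
  \big[Num.max/0]_(f : {ffun 'I_k -> 'I_m} | injectiveb f)
    \big[Num.max/0]_(g : {ffun 'I_k -> 'I_n} | injectiveb g)
      `|\det (mxsub f g M)|.

Definition shift_mx (R : pzRingType) (m n : nat) (t : 'cV[R]_m) (A : 'M[R]_(m, n))
  : 'M[R]_(m, n) := \matrix_(i, j) (t i 0 + A i j).

Definition col_supp (R : pzRingType) (m n : nat) (A : 'M[R]_(m, n)) (j : 'I_n)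
  : {set 'I_m} := [set i | A i j != 0].

(* Main.v *)
Require Import Defs.
From mathcomp Require Import all_boot all_order all_algebra.
From mathcomp Require Import reals.
From mathcomp Require Import lra.
Import Order.TTheory GRing.Theory Num.Theory.
Local Open Scope ring_scope.

Lemma my_le_bigmax (R : realFieldType) (T : finType) (P : pred T) (F : T -> R) j :
  P j -> F j <= \big[Num.max/0]_(i | P i) F i.
Proof. exact: le_bigmax_cond. Qed.

Lemma Delta_ge (R : realFieldType) m n k (M : 'M[R]_(m, n)) (f : {ffun 'I_k -> 'I_m}) (g : {ffun 'I_k -> 'I_n}) :
  injectiveb f -> injectiveb g -> `|\det (mxsub f g M)| <= Delta k M.
Proof.
move=> Hf Hg; rewrite /Delta.
apply: le_trans (@my_le_bigmax _ _ (fun f : {ffun 'I_k -> 'I_m} => injectiveb f) _ f Hf) => /=.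
exact: (@my_le_bigmax _ _ (fun g : {ffun 'I_k -> 'I_n} => injectiveb g) (fun g => `|\det (mxsub f g M)|) g Hg).
Qed.

Lemma entry_le (R : realFieldType) m n (M : 'M[R]_(m, n)) i j : `|M i j| <= Delta 1 M.
Proof.
have H : forall (T : finType) (x : T), injectiveb [ffun _ : 'I_1 => x].
  by move=> T x; apply/injectiveP => a b _; rewrite !ord1.
have := @Delta_ge _ _ _ _ M _ _ (H _ i) (H _ j).
by rewrite det_mx11 !mxE !ffunE.
Qed.

Lemma minor_le (R : realFieldType) m n (M : 'M[R]_(m, n)) i k j l :
  i != k -> j != l ->
  `|M i j * M k l - M i l * M k j| <= Delta 2 M.
Proof.
have H : forall (T : finType) (x y : T), x != y -> injectiveb [ffun a : 'I_2 => if a == 0 then x else y].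
  move=> T x y xy; apply/injectiveP => a b; rewrite !ffunE.
  case: a => [[|[|a]] Ha] //; case: b => [[|[|b]] Hb] //=; try (by move=> _; apply/val_inj);
   by move=> E; move: xy; rewrite ?E eqxx.
move=> ik jl; have := @Delta_ge _ _ _ _ M _ _ (H _ _ _ ik) (H _ _ _ jl).
rewrite (expand_det_row _ 0) !big_ord_recl big_ord0 addr0 /cofactor !det_mx11 !mxE !ffunE /=.
by rewrite /bump /= expr0 expr1 mul1r mulN1r mulrN.
Qed.

Theorem proposition3p1 (R : realType) (m n : nat) (A : 'M[R]_(m, n)) (t : 'cV[R]_m) :
  (forall i j, A i j \in [:: -1; 0; 1]) ->
  injective (fun j : 'I_n => col j A) ->
  (forall i, 0 <= t i 0 < 1) ->
  Delta 1 (shift_mx t A) <= 1 ->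
  Delta 2 (shift_mx t A) <= 1 ->
  forall j0 : 'I_n, (#|[set j : 'I_n | col_supp A j == col_supp A j0]| <= 2)%N.
Proof.
move=> HA Hinj Ht D1 D2 j0.
have vals : forall i j, [\/ A i j = -1, A i j = 0 | A i j = 1].
  move=> i j; move: (HA i j); rewrite !inE => /orP[/eqP->|/orP[/eqP->|/eqP->]]; [exact: Or31|exact: Or32|exact: Or33].
have t1 : forall i j, A i j = 1 -> t i 0 = 0.
  move=> i j Hij; have := le_trans (@entry_le _ _ _ (shift_mx t A) i j) D1.
  rewrite mxE Hij ler_norml => /andP [_ h]; have := Ht i; case/andP => h0 _; lra.
have L2 : forall i k j l, i != k -> j != l -> t i 0 = 0 -> t k 0 = 0 ->
    A i j = - A i l -> A i j != 0 -> A k j != 0 -> A k l != 0 -> A k j != A k l.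
  move=> i k j l ik jl ti tk Eij nz1 nz2 nz3; apply/negP => /eqP Ek.
  have := le_trans (@minor_le _ _ _ (shift_mx t A) _ _ _ _ ik jl) D2.
  rewrite !mxE ti tk !add0r Ek Eij ler_norml => /andP [h1 h2].
  rewrite Eij in nz1; move: h1 h2 nz1 nz3; case: (vals i l) => ->; case: (vals k l) => -> h1 h2 nz1 nz3;
    (try by move: nz1; rewrite oppr0 eqxx); (try by move: nz3; rewrite eqxx); lra.
have diffrow : forall j j', j != j' -> exists i, A i j != A i j'.
  move=> j j' jj'; apply/existsP; apply: contraR jj' => /existsPn H.
  apply/eqP/Hinj/matrixP => i c; rewrite !mxE; exact/eqP/negPn/H.
have diffpm : forall j j' i, (forall i, (A i j != 0) = (A i j' != 0)) ->
    A i j != A i j' -> [/\ t i 0 = 0, A i j' = - A i j & A i j != 0].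
  move=> j j' i S H; have s := S i.
  case: (vals i j) => Ej; case: (vals i j') => Ej'; rewrite Ej Ej' in s H *;
    try (by move: H; rewrite eqxx); try (by move: s; rewrite ?eqxx ?oppr_eq0 ?oner_eq0).
    split; [by apply: t1 Ej' | by rewrite ?opprK | by rewrite ?oppr_eq0 ?oner_eq0].
  split; [by apply: t1 Ej | by rewrite ?opprK | by rewrite ?oppr_eq0 ?oner_eq0].
have contra : forall j j' i, j != j' -> (forall i, (A i j != 0) = (A i j' != 0)) ->
    t i 0 = 0 -> A i j = A i j' -> A i j != 0 -> False.
  move=> j j' i jj' S ti Eq nz.
  have [k Hk] := diffrow _ _ jj'.
  have [tk Ek nzk] := diffpm _ _ _ S Hk.
  have ki : k != i by apply/eqP => ki; move: Hk; rewrite ki Eq eqxx.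
  have := L2 k i j j' ki jj' tk ti.
  rewrite Ek opprK => /(_ erefl nzk nz).
  by rewrite -Eq nz eqxx => /(_ isT).
rewrite leqNgt; apply/negP => /card_gt2P [x [y [z [[xS yS zS] [xy yz zx]]]]].
have supp : forall j, j \in [set j | col_supp A j == col_supp A j0] ->
    forall i, (A i j != 0) = (A i j0 != 0).
  by move=> j; rewrite inE => /eqP /setP H i; move: (H i); rewrite !inE.
have sxz : forall i, (A i x != 0) = (A i z != 0) by move=> i; rewrite !supp.
have syz : forall i, (A i y != 0) = (A i z != 0) by move=> i; rewrite !supp.
have sxy : forall i, (A i x != 0) = (A i y != 0) by move=> i; rewrite !supp.
have [i Hi] := diffrow _ _ xy.
have [ti Ey nzx] := diffpm _ _ _ sxy Hi.
have nzz : A i z != 0 by rewrite -sxz.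
have [Ez|Ez] : A i x = A i z \/ A i y = A i z.
  rewrite Ey; move: nzx nzz; case: (vals i z) => ->; case: (vals i x) => ->;
    rewrite ?opprK ?eqxx //; by [left | right].
  by apply: (contra x z i _ sxz ti Ez nzx); rewrite eq_sym.
by apply: (contra y z i yz syz ti Ez); rewrite -sxy.
Qed.
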